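(* Let $\mathbf{d}_{\omega} \in \{-1,1\}^M$ be a random vector with independent entries, each $\pm1$ with probability $1/2$, let $\mathbf{f}_\omega\in\mathbb{C}^W$ be fixed, $\mathbf{A}_\omega=\mathbf{d}_\omega\mathbf{f}_\omega^*$, and let $\mathbf{C}\in\mathbb{C}^{M\times W}$ be fixed. Then \[ \mathbb{E}\, |\langle\mathbf{C},\mathbf{A}_{\omega}\rangle|^2 \mathbf{d}_{\omega}\mathbf{d}_{\omega}^* \preccurlyeq 3\|\mathbf{C}\mathbf{f}_{\omega}\|_2^2 \mathbf{I}_M. \]
   Context: $\langle\mathbf{X},\mathbf{Y}\rangle=\mathrm{tr}(\mathbf{X}\mathbf{Y}^* )$ is the trace inner product, $\preccurlyeq$ is the positive semidefinite order, and $\mathbf{I}_M$ is the $M\times M$ identity. In the paper $\mathbf{f}_\omega$ is a column of a partial Fourier matrix. *)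

(* Defs.v *)
From HB Require Import structures.
From mathcomp Require Import all_boot all_order all_algebra.
Set Implicit Arguments. Unset Strict Implicit. Unset Printing Implicit Defensive.
Import Order.TTheory GRing.Theory Num.Theory.
Local Open Scope ring_scope.

(* Complex scalars: any numClosedFieldType C (e.g. algC, or complex R). *)

Definition adjmx (C : numClosedFieldType) m n (X : 'M[C]_(m, n)) : 'M[C]_(n, m) :=
  (map_mx Num.conj X)^T.

Definition trdot (C : numClosedFieldType) m n (X Y : 'M[C]_(m, n)) : C :=
  \tr (X *m adjmx Y).

Definition psdmx (C : numClosedFieldType) n (A : 'M[C]_n) : Prop :=
  adjmx A = A /\ forall v : 'cV[C]_n, 0 <= (adjmx v *m A *m v) 0 0.

Definition loewner_le (C : numClosedFieldType) n (A B : 'M[C]_n) : Prop :=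
  psdmx (B - A).

Definition signvec (C : numClosedFieldType) M (b : {ffun 'I_M -> bool}) : 'cV[C]_M :=
  \col_i ((-1) ^+ b i).

(* Expectation over d with i.i.d. uniform +-1 entries: uniform average over
   all 2^M sign patterns. *)
Definition rademacher_E (C : numClosedFieldType) M m n
    (F : 'cV[C]_M -> 'M[C]_(m, n)) : 'M[C]_(m, n) :=
  (2 ^+ M)^-1 *: \sum_(b : {ffun 'I_M -> bool}) F (signvec C b).

Definition norm2sq (C : numClosedFieldType) n (v : 'cV[C]_n) : C :=
  \sum_i `|v i 0| ^+ 2.

(* Main.v *)
Require Import Defs.
From HB Require Import structures.
From mathcomp Require Import all_boot all_order all_algebra.
From mathcomp Require Import ring.
Set Implicit Arguments. Unset Strict Implicit. Unset Printing Implicit Defensive.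
Import Order.TTheory GRing.Theory Num.Theory.
Local Open Scope ring_scope.

Definition ext n (p : bool * {ffun 'I_n -> bool}) : {ffun 'I_n.+1 -> bool} :=
  [ffun i => if unlift ord0 i is Some j then p.2 j else p.1].
Definition unext n (b : {ffun 'I_n.+1 -> bool}) : bool * {ffun 'I_n -> bool} :=
  (b ord0, [ffun j => b (lift ord0 j)]).

Lemma ext0 n p : ext p (@ord0 n) = p.1.
Proof. by rewrite /ext ffunE unlift_none. Qed.
Lemma extS n p (j : 'I_n) : ext p (lift ord0 j) = p.2 j.
Proof. by rewrite /ext ffunE liftK. Qed.

Lemma sum_split (R : nmodType) n (F : {ffun 'I_n.+1 -> bool} -> R) :
  \sum_b F b = \sum_(x : bool) \sum_(b : {ffun 'I_n -> bool}) F (ext (x, b)).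
Proof.
rewrite pair_big /= (reindex (@ext n)) //=.
exists (@unext n) => [[x b] _ | b _].
  by rewrite /unext ext0; congr pair; apply/ffunP => j; rewrite ffunE extS.
apply/ffunP => i; rewrite /ext ffunE /=.
case: (unliftP ord0 i) => [j ->|->] //; by rewrite ffunE.
Qed.
Section S.
Variable C : numClosedFieldType.
Definition sg (x : bool) : C := (-1) ^+ x.
Definition Xs n (b : {ffun 'I_n -> bool}) (a : 'I_n -> C) := \sum_i sg (b i) * a i.

Lemma Xext n x b (a : 'I_n.+1 -> C) :
  Xs (ext (x, b)) a = sg x * a ord0 + Xs b (fun j => a (lift ord0 j)).
Proof.
rewrite /Xs big_ord_recl ext0; congr (_ + _); apply: eq_bigr => j _; by rewrite extS.
Qed.

Lemma nsq (z : C) : `|z| ^+ 2 = z * z^*. Proof. exact: normCK. Qed.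

Lemma sum_bool2 (F : bool -> C) : \sum_x F x = F true + F false.
Proof. by rewrite big_bool. Qed.

Lemma card_bf n : #|{ffun 'I_n -> bool}| = (2 ^ n)%N.
Proof. by rewrite card_ffun card_bool card_ord. Qed.

Lemma sum_cst n (c : C) : \sum_(b : {ffun 'I_n -> bool}) c = 2 ^+ n * c.
Proof. by rewrite sumr_const card_bf -[c *+ _]mulr_natl natrX. Qed.

Lemma para (u p : C) : `|-1 * p + u| ^+ 2 + `|1 * p + u| ^+ 2 = 2 * `|u| ^+ 2 + 2 * `|p| ^+ 2.
Proof. rewrite !normCK !rmorphD !rmorphM /= rmorphN !rmorph1; ring. Qed.

Lemma mom2 n (a : 'I_n -> C) :
  \sum_b `|Xs b a| ^+ 2 = 2 ^+ n * \sum_i `|a i| ^+ 2.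
Proof.
elim: n a => [|n IH] a.
  rewrite big_ord0 mulr0.
  by apply: big1 => b _; rewrite /Xs big_ord0 normr0 expr0n.
set a' := (fun j : 'I_n => a (lift ord0 j)).
rewrite sum_split sum_bool2 -big_split /=.
rewrite (eq_bigr (fun b => 2 * `|Xs b a'|^+2 + 2 * `|a ord0|^+2)); last first.
  by move=> b _; rewrite !Xext /sg expr1 expr0 para.
rewrite big_split /= -mulr_sumr IH sum_cst big_ord_recl [2 ^+ n.+1]exprS /a'; ring.
Qed.
End S.
Section T.
Variable C : numClosedFieldType.
Lemma amgm (x y : C) : x \is Num.real -> y \is Num.real -> 2 * x * y <= x ^+ 2 + y ^+ 2.
Proof.
move=> hx hy; rewrite -subr_ge0.
have -> : x ^+ 2 + y ^+ 2 - 2 * x * y = `|x - y| ^+ 2.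
  by rewrite real_normK ?rpredB //; ring.
by rewrite exprn_ge0.
Qed.

Lemma conj_real (z : C) : z^* = z -> z \is Num.real.
Proof. by move=> h; apply/CrealP. Qed.

Lemma rnorm (u p : C) : `|u * p^* + u^* * p| <= 2 * (`|u| * `|p|).
Proof.
apply: le_trans (ler_normD _ _) _.
by rewrite !normrM !norm_conjC mulr2n mulrDl mul1r.
Qed.

Lemma pointwise (u w p q : C) :
  `|-1 * p + u| ^+ 2 * `|-1 * q + w| ^+ 2 + `|1 * p + u| ^+ 2 * `|1 * q + w| ^+ 2 <=
  2 * (`|u| ^+ 2 * `|w| ^+ 2) + 6 * (`|u| ^+ 2 * `|q| ^+ 2) + 6 * (`|w| ^+ 2 * `|p| ^+ 2)
  + 2 * (`|p| ^+ 2 * `|q| ^+ 2).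
Proof.
set r := u * p^* + u^* * p.
set s := w * q^* + w^* * q.
set B := 2 * (`|u| ^+ 2 * `|w| ^+ 2) + 2 * (`|u| ^+ 2 * `|q| ^+ 2) + 2 * (`|w| ^+ 2 * `|p| ^+ 2)
  + 2 * (`|p| ^+ 2 * `|q| ^+ 2).
have E1 : `|-1 * p + u| ^+ 2 * `|-1 * q + w| ^+ 2 + `|1 * p + u| ^+ 2 * `|1 * q + w| ^+ 2
   = B + 2 * (r * s).
  rewrite /B /r /s !normCK !rmorphD !rmorphM /= rmorphN !rmorph1; ring.
have E2 : 2 * (`|u| ^+ 2 * `|w| ^+ 2) + 6 * (`|u| ^+ 2 * `|q| ^+ 2) + 6 * (`|w| ^+ 2 * `|p| ^+ 2)
  + 2 * (`|p| ^+ 2 * `|q| ^+ 2) = B + 2 * (2 * ((`|u| * `|q|) ^+ 2 + (`|w| * `|p|) ^+ 2)).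
  rewrite /B !exprMn; ring.
rewrite E1 E2 lerD2l ler_pM2l ?ltr0n //.
have rr : r \is Num.real.
  by apply: conj_real; rewrite /r rmorphD !rmorphM /= !conjCK addrC mulrC [p^* * _]mulrC.
have sr : s \is Num.real.
  by apply: conj_real; rewrite /s rmorphD !rmorphM /= !conjCK addrC mulrC [q^* * _]mulrC.
apply: le_trans (real_ler_norm (rpredM rr sr)) _.
rewrite normrM.
apply: le_trans (ler_pM (normr_ge0 _) (normr_ge0 _) (rnorm u p) (rnorm w q)) _.
have -> : 2 * (`|u| * `|p|) * (2 * (`|w| * `|q|)) = 2 * (2 * (`|u| * `|q|) * (`|w| * `|p|)).
  ring.
rewrite ler_pM2l ?ltr0n //.
apply: amgm; apply: rpredM; apply: normr_real.
Qed.
End T.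
Section U.
Variable C : numClosedFieldType.
Lemma mom4 n (a c : 'I_n -> C) :
  \sum_b `|Xs b a| ^+ 2 * `|Xs b c| ^+ 2 <=
  3 * 2 ^+ n * ((\sum_i `|a i| ^+ 2) * (\sum_i `|c i| ^+ 2)).
Proof.
elim: n a c => [|n IH] a c.
  rewrite !big_ord0 !mulr0 big1 // => b _.
  by rewrite /Xs big_ord0 normr0 expr0n mul0r.
set a' := (fun j : 'I_n => a (lift ord0 j)).
set c' := (fun j : 'I_n => c (lift ord0 j)).
rewrite sum_split sum_bool2 -big_split /=.
under eq_bigr do rewrite !Xext /sg expr1 expr0.
apply: le_trans (ler_sum _ (fun b _ => pointwise (Xs b a') (Xs b c') (a ord0) (c ord0))) _.
set pa := `|a ord0| ^+ 2.
set pc := `|c ord0| ^+ 2.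
rewrite !big_split /= -!mulr_sumr -!mulr_suml sum_cst (mom2 a') (mom2 c').
rewrite !big_ord_recl -/a' -/c' -/pa -/pc.
set A := \sum_(i < n) `|a' i| ^+ 2.
set Cc := \sum_(i < n) `|c' i| ^+ 2.
have h1 : \sum_b `|Xs b a'| ^+ 2 * `|Xs b c'| ^+ 2 <= 3 * 2 ^+ n * (A * Cc) := IH a' c'.
apply: (@le_trans _ _ (2 * (3 * 2 ^+ n * (A * Cc)) + 6 * (2 ^+ n * A * pc) + 6 * (2 ^+ n * Cc * pa) + 2 * (pa * pc * 2 ^+ n))).
  apply: lerD; [apply: lerD; [apply: lerD|]|].
  - by rewrite ler_pM2l ?ltr0n.
  - by [].
  - by [].
  - rewrite le_eqVlt; apply/orP; left; apply/eqP; rewrite /pc; ring.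
rewrite -subr_ge0.
have -> : 3 * 2 ^+ n.+1 * ((pa + A) * (pc + Cc)) -
  (2 * (3 * 2 ^+ n * (A * Cc)) + 6 * (2 ^+ n * A * pc) + 6 * (2 ^+ n * Cc * pa) + 2 * (pa * pc * 2 ^+ n))
  = 4 * 2 ^+ n * (pa * pc) by rewrite exprS; ring.
by rewrite !mulr_ge0 ?exprn_ge0 ?ler0n.
Qed.
End U.
Section V.
Variable C : numClosedFieldType.
Lemma conj_sg (x : bool) : (sg C x)^* = sg C x.
Proof. by case: x; rewrite /sg ?expr1 ?expr0 ?rmorphN rmorph1. Qed.

Lemma dd M (b : {ffun 'I_M -> bool}) i j :
  (signvec C b *m adjmx (signvec C b)) i j = sg C (b i) * sg C (b j).
Proof. by rewrite !mxE big_ord1 /adjmx !mxE conj_sg. Qed.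

Lemma trdotE M W (f : 'cV[C]_W) (Cm : 'M[C]_(M, W)) b :
  trdot Cm (signvec C b *m adjmx f) = Xs b (fun i => (Cm *m f) i 0).
Proof.
rewrite /trdot /mxtrace /Xs; apply: eq_bigr => i _.
rewrite !mxE mulr_sumr; apply: eq_bigr => j _.
rewrite /adjmx !mxE big_ord1 !mxE rmorphM /= conjCK conj_sg; ring.
Qed.
End V.
Section W.
Variable C : numClosedFieldType.
Lemma qd M (v : 'cV[C]_M) b :
  (adjmx v *m (signvec C b *m adjmx (signvec C b)) *m v) 0 0 = `|Xs b (fun i => v i 0)| ^+ 2.
Proof.
rewrite !mulmxA -mulmxA mxE big_ord1 normCK mulrC; congr (_ * _).
  rewrite mxE /Xs; apply: eq_bigr => i _.
  by rewrite /adjmx !mxE conj_sg.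
rewrite mxE /Xs rmorph_sum /=; apply: eq_bigr => i _.
by rewrite /adjmx !mxE rmorphM /= conj_sg mulrC.
Qed.

Lemma q1 M (v : 'cV[C]_M) : (adjmx v *m v) 0 0 = \sum_i `|v i 0| ^+ 2.
Proof.
rewrite mxE; apply: eq_bigr => i _; by rewrite /adjmx !mxE normCK mulrC.
Qed.
End W.
Theorem lemma4 (C : numClosedFieldType) (M W : nat)
    (f : 'cV[C]_W) (Cm : 'M[C]_(M, W)) :
  loewner_le
    (rademacher_E (fun d : 'cV[C]_M =>
       `|trdot Cm (d *m adjmx f)| ^+ 2 *: (d *m adjmx d)))
    ((3 * norm2sq (Cm *m f)) *: 1%:M).
Proof.
rewrite /loewner_le /rademacher_E.
under eq_bigr do rewrite trdotE.
set c := (fun i => (Cm *m f) i 0).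
set K := 3 * norm2sq (Cm *m f).
have Kr : K^* = K.
  apply/CrealP; rewrite /K /norm2sq rpredM ?rpred_nat //.
  by apply: rpred_sum => i _; rewrite rpredX ?normr_real.
set E := (2 ^+ M)^-1 *: _.
have Eent : forall i j, E i j = (2 ^+ M)^-1 *
     \sum_(b : {ffun 'I_M -> bool}) `|Xs b c| ^+ 2 * (sg C (b i) * sg C (b j)).
  move=> i j; rewrite /E mxE summxE; congr (_ * _); apply: eq_bigr => b _.
  by rewrite mxE dd.
have Aent : forall i j, (K *: 1%:M - E) i j = K * (i == j)%:R - (2 ^+ M)^-1 *
     \sum_(b : {ffun 'I_M -> bool}) `|Xs b c| ^+ 2 * (sg C (b i) * sg C (b j)).
  move=> i j; rewrite !mxE summxE; congr (_ - _ * _); apply: eq_bigr => b _.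
  by rewrite mxE dd.
split.
  apply/matrixP => i j; rewrite [RHS]Aent /adjmx mxE mxE Aent rmorphB rmorphM /= Kr.
  rewrite rmorphM /= fmorphV rmorphXn rmorph_nat rmorph_sum /=.
  congr (_ - _ * _).
    by rewrite eq_sym.
    by rewrite (conjC_nat _ 2).
  apply: eq_bigr => b _.
  rewrite rmorphM /= conj_Creal ?rpredX ?normr_real // rmorphM /= !conj_sg mulrC.
  by rewrite mulrC [sg C (b j) * _]mulrC.
move=> v.
rewrite mulmxBr mulmxBl -scalemxAr mulmx1 -scalemxAl.
have -> : (K *: (adjmx v *m v) - adjmx v *m E *m v) 0 0 =
   K * (adjmx v *m v) 0 0 - (adjmx v *m E *m v) 0 0 by rewrite !mxE.
have -> : adjmx v *m E *m v = (2 ^+ M)^-1 *: \sum_(b : {ffun 'I_M -> bool})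
   `|Xs b c| ^+ 2 *: (adjmx v *m (signvec C b *m adjmx (signvec C b)) *m v).
  rewrite /E -scalemxAr -scalemxAl mulmx_sumr mulmx_suml; congr (_ *: _).
  by apply: eq_bigr => b _; rewrite -scalemxAr -scalemxAl.
set v' := (fun i => v i 0).
rewrite q1 mxE summxE.
rewrite (eq_bigr (fun b => `|Xs b c| ^+ 2 * `|Xs b v'| ^+ 2)); last first.
  by move=> b _; rewrite mxE qd.
rewrite subr_ge0.
have h := mom4 c v'.
have hp : (0 : C) < 2 ^+ M by rewrite exprn_gt0 ?ltr0n.
apply: le_trans (ler_wpM2l _ h) _; first by rewrite invr_ge0 ltW.
rewrite le_eqVlt; apply/orP; left; apply/eqP.
rewrite /K /norm2sq.
field.
by rewrite gt_eqF.
Qed.
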